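(* Let $r,s,t,a,b,c$ be real numbers with $t\neq0$, and let $M_{H,n}^{(3)}$, $M_{h,n}^{(3)}$ be the matrix sequences defined in the context (with $M_{h,n}^{(3)}$ extended to negative indices as described there). Then for every nonnegative integer $n$: $$M_{H,n}^{(3)}=bM_{h,n}^{(3)}+(c-rb)M_{h,n-1}^{(3)}+taM_{h,n-2}^{(3)},$$ $$M_{H,n}^{(3)}=aM_{h,n+1}^{(3)}+(b-ra)M_{h,n}^{(3)}+(c-rb-sa)M_{h,n-1}^{(3)}.$$
   Context: The third-order Horadam matrix sequence is the sequence of $3\times3$ matrices defined by $M_{H,n+3}^{(3)}=rM_{H,n+2}^{(3)}+sM_{H,n+1}^{(3)}+tM_{H,n}^{(3)}$ ($n\ge0$) with $M_{H,0}^{(3)}=\begin{pmatrix} b & c-rb & ta\\ a & b-ra & c-rb-sa\\ \frac{1}{t}(c-rb-sa) & a-\frac{r}{t}(c-rb-sa) & \frac1t\big(-sc+(t+rs)b+(s^2-rt)a\big)\end{pmatrix}$, $M_{H,1}^{(3)}=\begin{pmatrix} c & sb+ta & tb\\ b & c-rb & ta\\ a & b-ra & c-rb-sa\end{pmatrix}$, $M_{H,2}^{(3)}=\begin{pmatrix} rc+sb+ta & sc+tb & tc\\ c & sb+ta & tb\\ b & c-rb & ta\end{pmatrix}$. The generalized Tribonacci matrix sequence satisfies the same recurrence with $M_{h,0}^{(3)}=I_3$, $M_{h,1}^{(3)}=\begin{pmatrix} r&s&t\\1&0&0\\0&1&0\end{pmatrix}$, $M_{h,2}^{(3)}=\begin{pmatrix}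 r^2+s&rs+t&rt\\ r&s&t\\ 1&0&0\end{pmatrix}$; it is extended to negative indices by running the recurrence backwards, $M_{h,k}^{(3)}=\frac1t\big(M_{h,k+3}^{(3)}-rM_{h,k+2}^{(3)}-sM_{h,k+1}^{(3)}\big)$ for $k<0$. *)

(* Defs.v *)
From HB Require Import structures.
From mathcomp Require Import all_boot all_order all_algebra.
Set Implicit Arguments. Unset Strict Implicit. Unset Printing Implicit Defensive.
Import Order.TTheory GRing.Theory Num.Theory.
Local Open Scope ring_scope.

Definition mx3 (R : realFieldType) (rows : seq (seq R)) : 'M[R]_3 :=
  \matrix_(i < 3, j < 3) nth 0 (nth [::] rows i) j.

Section Defs.
Variables (R : realFieldType) (r s t : R).

(* forward iteration of the third-order recurrence X_{n+3} = r X_{n+2} + s X_{n+1} + t X_n: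
   rec3_triple A0 A1 A2 n = (X_n, X_{n+1}, X_{n+2}) *)
Fixpoint rec3_triple (A0 A1 A2 : 'M[R]_3) (n : nat) : 'M[R]_3 * 'M[R]_3 * 'M[R]_3 :=
  match n with
  | 0 => (A0, A1, A2)
  | n'.+1 => let: (x, y, z) := rec3_triple A0 A1 A2 n' in
             (y, z, r *: z + s *: y + t *: x)
  end.

Definition rec3 (A0 A1 A2 : 'M[R]_3) (n : nat) : 'M[R]_3 :=
  (rec3_triple A0 A1 A2 n).1.1.

(* backward iteration: rec3_back_triple A0 A1 A2 k = (X_{-k}, X_{-k+1}, X_{-k+2}),
   using X_m = t^-1 (X_{m+3} - r X_{m+2} - s X_{m+1}) *)
Fixpoint rec3_back_triple (A0 A1 A2 : 'M[R]_3) (k : nat) : 'M[R]_3 * 'M[R]_3 * 'M[R]_3 :=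
  match k with
  | 0 => (A0, A1, A2)
  | k'.+1 => let: (x, y, z) := rec3_back_triple A0 A1 A2 k' in
             (t^-1 *: (z - r *: y - s *: x), x, y)
  end.

Definition rec3_int (A0 A1 A2 : 'M[R]_3) (k : int) : 'M[R]_3 :=
  match k with
  | Posz n => rec3 A0 A1 A2 n
  | Negz k' => (rec3_back_triple A0 A1 A2 k'.+1).1.1
  end.

Definition Mh (k : int) : 'M[R]_3 :=
  rec3_int 1%:M
    (mx3 [:: [:: r; s; t]; [:: 1; 0; 0]; [:: 0; 1; 0]])
    (mx3 [:: [:: r ^+ 2 + s; r * s + t; r * t];
                                [:: r; s; t]; [:: 1; 0; 0]]) k.

Variables (a b c : R).

Definition MH0 : 'M[R]_3 :=
  mx3
   [:: [:: b; c - r * b; t * a];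
       [:: a; b - r * a; c - r * b - s * a];
       [:: t^-1 * (c - r * b - s * a); a - r / t * (c - r * b - s * a);
           t^-1 * (- (s * c) + (t + r * s) * b + (s ^+ 2 - r * t) * a)]].

Definition MH1 : 'M[R]_3 :=
  mx3
   [:: [:: c; s * b + t * a; t * b];
       [:: b; c - r * b; t * a];
       [:: a; b - r * a; c - r * b - s * a]].

Definition MH2 : 'M[R]_3 :=
  mx3
   [:: [:: r * c + s * b + t * a; s * c + t * b; t * c];
       [:: c; s * b + t * a; t * b];
       [:: b; c - r * b; t * a]].

Definition MH (n : nat) : 'M[R]_3 := rec3 MH0 MH1 MH2 n.

End Defs.

(* Main.v *)
Require Import Defs.
From HB Require Import structures.
From mathcomp Require Import all_boot all_order all_algebra.
From mathcomp Require Import ring lra zify.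
Import Order.TTheory GRing.Theory Num.Theory.
Local Open Scope ring_scope.

Section S.
Variables (R : realFieldType) (r s t : R).

Lemma rec3_tripleE (A0 A1 A2 : 'M[R]_3) n :
  rec3_triple r s t A0 A1 A2 n = (rec3 r s t A0 A1 A2 n, rec3 r s t A0 A1 A2 n.+1, rec3 r s t A0 A1 A2 n.+2).
Proof.
elim: n => [|n IH] //=. rewrite /rec3 /=. rewrite IH /=.
by case: (rec3_triple r s t A0 A1 A2 n) => [[x y] z].
Qed.

Lemma rec3S (A0 A1 A2 : 'M[R]_3) n :
  rec3 r s t A0 A1 A2 n.+3 = r *: rec3 r s t A0 A1 A2 n.+2 + s *: rec3 r s t A0 A1 A2 n.+1 + t *: rec3 r s t A0 A1 A2 n.
Proof.
rewrite {1}/rec3 /= rec3_tripleE /=. done.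
Qed.

Definition G (m : nat) := Mh r s t (m%:Z - 2).

Lemma G2 m : G m.+2 = Mh r s t m.
Proof. rewrite /G; congr Mh; lia. Qed.

Definition I1 := (mx3 [:: [:: r; s; t]; [:: 1; 0; 0]; [:: 0; 1; 0]]).
Definition I2 := (mx3 [:: [:: r ^+ 2 + s; r * s + t; r * t]; [:: r; s; t]; [:: 1; 0; 0]]).

Lemma G1 : G 1 = t^-1 *: (I2 - r *: I1 - s *: 1%:M).
Proof. reflexivity. Qed.
Lemma G0 : G 0 = t^-1 *: (I1 - r *: 1%:M - s *: G 1).
Proof. reflexivity. Qed.
Lemma G2' : G 2 = 1%:M. Proof. by rewrite G2. Qed.
Lemma G3 : G 3 = I1. Proof. by rewrite G2. Qed.
Lemma G4 : G 4 = I2. Proof. by rewrite G2. Qed.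

Lemma zmod_aux (V : zmodType) (x a b : V) : x = a + b + (x - a - b).
Proof. by rewrite -(addrA x) -opprD (addrC (a + b)) subrK. Qed.

Lemma Grec (ht : t != 0) m : G m.+3 = r *: G m.+2 + s *: G m.+1 + t *: G m.
Proof.
case: m => [|[|m]].
- rewrite G3 G2' G0. rewrite (scalerA t t^-1) mulfV // scale1r.
  exact: zmod_aux.
- rewrite G4 G3 G2' G1 (scalerA t t^-1) mulfV // scale1r.
  exact: zmod_aux.
- rewrite !G2. rewrite /Mh /=. exact: rec3S.
Qed.

Definition isrec (F : nat -> 'M[R]_3) :=
  forall n, F n.+3 = r *: F n.+2 + s *: F n.+1 + t *: F n.

Lemma aux6 (V:zmodType) (a b c d e f: V): a+b+c+(d+e+f) = a+d+(b+e)+(c+f).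
Proof. by rewrite addrACA (addrACA a). Qed.

Lemma isrecD F H : isrec F -> isrec H -> isrec (fun n => F n + H n).
Proof.
move=> hF hH n; rewrite hF hH !scalerDr.
by rewrite aux6.
Qed.

Lemma isrecZ F k : isrec F -> isrec (fun n => k *: F n).
Proof.
move=> hF n; rewrite hF !scalerDr !scalerA.
by rewrite (mulrC k r) (mulrC k s) (mulrC k t).
Qed.

Lemma isrec_uniq F H : isrec F -> isrec H -> F 0 = H 0 -> F 1 = H 1 -> F 2 = H 2 ->
  forall n, F n = H n.
Proof.
move=> hF hH h0 h1 h2.
suff K : forall n, F n = H n /\ F n.+1 = H n.+1 /\ F n.+2 = H n.+2 by move=> n; case: (K n).
elim=> [|n [e0 [e1 e2]]]; first by [].
by split=> //; split=> //; rewrite hF hH e0 e1 e2.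
Qed.

Lemma Grec' (ht : t != 0) : isrec G. Proof. exact: Grec. Qed.
End S.
Arguments G {R}. Arguments Grec' {R}. Arguments I1 {R}. Arguments I2 {R}. Arguments isrec {R}.


Lemma G5 (R : realFieldType) (r s t : R) : G r s t 5 = r *: I2 r s t + s *: I1 r s t + t *: 1%:M.
Proof. by rewrite G2. Qed.

Lemma MHrec (R : realFieldType) (r s t a b c : R) : isrec r s t (MH r s t a b c).
Proof. move=> n; exact: rec3S. Qed.

Ltac mxt := rewrite ?G2' ?G0 ?G1 ?G3 ?G4 ?G5 ?G1 /MH /rec3 /= /MH0 /MH1 /MH2 /I1 /I2 /mx3;
  apply/matrixP; case=> [[|[|[|?]]] ?] //; case=> [[|[|[|?]]] ?] //; rewrite !mxE /=; by field.

Theorem theorem3p2 (R : realFieldType) (r s t a b c : R) (ht : t != 0) (n : nat) :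
  MH r s t a b c n =
    b *: Mh r s t n%:Z + (c - r * b) *: Mh r s t (n%:Z - 1)
    + (t * a) *: Mh r s t (n%:Z - 2)
  /\
  MH r s t a b c n =
    a *: Mh r s t (n%:Z + 1) + (b - r * a) *: Mh r s t n%:Z
    + (c - r * b - s * a) *: Mh r s t (n%:Z - 1).
Proof.
have e0 : Mh r s t n%:Z = G r s t n.+2 by rewrite G2.
have e1 : Mh r s t (n%:Z - 1) = G r s t n.+1 by rewrite /G; congr Mh; lia.
have e2 : Mh r s t (n%:Z - 2) = G r s t n by [].
have e3 : Mh r s t (n%:Z + 1) = G r s t n.+3 by rewrite /G; congr Mh; lia.
rewrite e0 e1 e2 e3; split.
- have hG := Grec' r s t ht.
  apply: (@isrec_uniq R r s t (MH r s t a b c) (fun n => b *: G r s t n.+2 + (c - r * b) *: G r s t n.+1 + (t * a) *: G r s t n)).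
  + exact: MHrec.
  + apply: isrecD; [apply: isrecD|]; apply: isrecZ => m; exact: hG.
  + mxt.
  + mxt.
  + mxt.
- have hG := Grec' r s t ht.
  apply: (@isrec_uniq R r s t (MH r s t a b c) (fun n => a *: G r s t n.+3 + (b - r * a) *: G r s t n.+2 + (c - r * b - s * a) *: G r s t n.+1)).
  + exact: MHrec.
  + apply: isrecD; [apply: isrecD|]; apply: isrecZ => m; exact: hG.
  + mxt.
  + mxt.
  + mxt.
Qed.
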